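(* Let $c_{n,k}$ be the number of matchings of size $n$ with exactly $k$ occurrences of the endhered pattern $321$, and $a_{n,0}$ the number of matchings of size $n$ with no occurrence of the endhered pattern $21$. For any $n>0$, $$c_{n,0}=\sum_{s=0}^{\lfloor n/2\rfloor}\binom{n-s}{s}a_{n-s,0},$$ and for any $k>0$, $$c_{n,k}=\sum_{s=1}^{\lfloor (n-k)/2\rfloor}\binom{k+s-1}{k}\binom{n-k-s}{s}a_{n-k-s,0}.$$
   Context: A matching of size $n$ is a set of $n$ arcs $(a,b)$ with $1\le a<b\le 2n$ such that each point of $\{1,\dots,2n\}$ belongs to exactly one arc (the empty matching has size $0$). An occurrence of the endhered pattern $21$ in a matching is a pair of arcs of the form $(i+1,j+2),(i+2,j+1)$; an occurrence of the endhered pattern $321$ is a triple of arcs of the form $(i+1,j+3),(i+2,j+2),(i+3,j+1)$ (three mutually nested arcs with consecutive starting points and consecutive ending points). The number of occurrences is the number of such pairs (resp. triples). *)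

(* Defs.v *)
From mathcomp Require Import all_boot.
Set Implicit Arguments. Unset Strict Implicit. Unset Printing Implicit Defensive.

(* Points {1,...,2n} are represented (shifted by one) as 'I_(2n) = {0,...,2n-1};
   an arc (a,b) is a pair of points, and a matching is a set of arcs. *)
Definition arc (n : nat) := ('I_(n.*2) * 'I_(n.*2))%type.

Definition is_matching (n : nat) (M : {set arc n}) : bool :=
  [forall p in M, (p.1 < p.2)%N] &&
  [forall x : 'I_(n.*2), #|[set p in M | (p.1 == x) || (p.2 == x)]| == 1%N].

Definition occ21 (n : nat) (M : {set arc n}) : nat :=
  #|[set pq : arc n * arc n | [&& pq.1 \in M, pq.2 \in M,
        (pq.2.1 : nat) == (pq.1.1 : nat).+1 &
        (pq.1.2 : nat) == (pq.2.2 : nat).+1]]|.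

Definition occ321 (n : nat) (M : {set arc n}) : nat :=
  #|[set t : arc n * arc n * arc n | [&& t.1.1 \in M, t.1.2 \in M, t.2 \in M,
        (t.1.2.1 : nat) == (t.1.1.1 : nat).+1,
        (t.2.1 : nat) == (t.1.2.1 : nat).+1,
        (t.1.1.2 : nat) == (t.1.2.2 : nat).+1 &
        (t.1.2.2 : nat) == (t.2.2 : nat).+1]]|.

Definition c_nk (n k : nat) : nat :=
  #|[set M : {set arc n} | is_matching M && (occ321 M == k)]|.

Definition a_n0 (n : nat) : nat :=
  #|[set M : {set arc n} | is_matching M && (occ21 M == 0%N)]|.

(* Main.v *)
Require Import Defs.
From mathcomp Require Import all_boot.
From mathcomp Require Import zify.
Set Implicit Arguments. Unset Strict Implicit. Unset Printing Implicit Defensive.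
Local Notation arc := Defs.arc.


Definition inM n (M : {set arc n}) (x y : nat) : bool :=
  [exists p in M, (nat_of_ord p.1 == x) && (nat_of_ord p.2 == y)].

Lemma inME n (M : {set arc n}) (p : arc n) : inM M p.1 p.2 = (p \in M).
Proof.
apply/existsP/idP => [[q /andP[qM /andP[/eqP e1 /eqP e2]]]|pM]; last by exists p; rewrite pM !eqxx.
suff -> : p = q by [].
case: p q e1 e2 {qM} => [p1 p2] [q1 q2] /= e1 e2.
by congr pair; apply: val_inj.
Qed.

Lemma inM_bound n (M : {set arc n}) x y : inM M x y -> x < n.*2 /\ y < n.*2.
Proof. by case/existsP=> p /andP[_ /andP[/eqP <- /eqP <-]]; split; apply: ltn_ord. Qed.

Lemma inM_set n (P : nat -> nat -> bool) x y :
  inM [set p : arc n | P (nat_of_ord p.1) (nat_of_ord p.2)] x y = [&& x < n.*2, y < n.*2 & P x y].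
Proof.
apply/existsP/idP => [[p /andP[]]|/and3P[hx hy hP]].
  by rewrite inE => hP /andP[/eqP <- /eqP <-]; rewrite !ltn_ord.
by exists (Ordinal hx, Ordinal hy); rewrite inE /= hP !eqxx.
Qed.

Lemma set_ext2 n (A B : {set arc n}) : (forall x y, inM A x y = inM B x y) -> A = B.
Proof. by move=> h; apply/setP => p; rewrite -!inME h. Qed.

Definition matchR n (M : {set arc n}) : Prop :=
 [/\ (forall x y, inM M x y -> x < y),
     (forall x, x < n.*2 -> exists y, inM M x y || inM M y x) &
     (forall x y u v, inM M x y -> inM M u v ->
         [|| x == u, x == v, y == u | y == v] -> x = u /\ y = v)].

Lemma matchingP n (M : {set arc n}) : is_matching M <-> matchR M.
Proof.
split.
- case/andP => /forallP h1 /forallP h2; split.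
  + move=> x y /existsP[p /andP[pM /andP[/eqP <- /eqP <-]]].
    by have := h1 p; rewrite pM.
  + move=> x hx; have := h2 (Ordinal hx); case/cards1P => p0 hp0.
    have : p0 \in [set p in M | (p.1 == Ordinal hx) || (p.2 == Ordinal hx)].
      by rewrite hp0 set11.
    rewrite inE => /andP[pM /orP[/eqP e|/eqP e]].
      by exists (nat_of_ord p0.2); rewrite -{1}(inME M p0) in pM; rewrite -[x]/(val (Ordinal hx)) -e pM.
    by exists (nat_of_ord p0.1); rewrite -{1}(inME M p0) in pM; rewrite -[x]/(val (Ordinal hx)) -e pM orbT.
  + move=> x y u v /existsP[p /andP[pM /andP[/eqP ex /eqP ey]]]
                  /existsP[q /andP[qM /andP[/eqP eu /eqP ev]]] hs.
    suff pq : p = q by subst.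
    have [z hz] : exists z, ((p.1 == z) || (p.2 == z)) && ((q.1 == z) || (q.2 == z)).
      case/or4P: hs => /eqP e.
      * exists p.1; rewrite eqxx /=; apply/orP; left; apply/eqP/ord_inj; rewrite ?ex ?ey ?eu ?ev; lia.
      * exists p.1; rewrite eqxx /=; apply/orP; right; apply/eqP/ord_inj; rewrite ?ex ?ey ?eu ?ev; lia.
      * exists p.2; rewrite eqxx orbT /=; apply/orP; left; apply/eqP/ord_inj; rewrite ?ex ?ey ?eu ?ev; lia.
      * exists p.2; rewrite eqxx orbT /=; apply/orP; right; apply/eqP/ord_inj; rewrite ?ex ?ey ?eu ?ev; lia.
    case/andP: hz => hzp hzq.
    have := h2 z; case/cards1P => r hr.
    have : p \in [set p in M | (p.1 == z) || (p.2 == z)] by rewrite inE pM hzp.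
    have : q \in [set p in M | (p.1 == z) || (p.2 == z)] by rewrite inE qM hzq.
    by rewrite hr !inE => /eqP -> /eqP ->.
- case=> h1 h2 h3; apply/andP; split.
  + by apply/forallP => p; apply/implyP => pM; apply: h1; rewrite inME.
  + apply/forallP => z; apply/cards1P.
    have [y] := h2 _ (ltn_ord z).
    have key : forall p, p \in M -> ((p.1 == z) || (p.2 == z)) ->
       forall q, q \in M -> ((q.1 == z) || (q.2 == z)) -> p = q.
      move=> p pM hp q qM hq.
      rewrite -inME in pM; rewrite -inME in qM.
      have [e1 e2] : nat_of_ord p.1 = nat_of_ord q.1 /\ nat_of_ord p.2 = nat_of_ord q.2.
        apply: (h3 _ _ _ _ pM qM).
        by case/orP: hp => /eqP ->; case/orP: hq => /eqP ->; rewrite eqxx ?orbT.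
      case: p q e1 e2 {pM qM hp hq} => [p1 p2] [q1 q2] /= e1 e2.
      by congr pair; apply: val_inj.
    case/orP => /existsP[p /andP[pM /andP[/eqP e1 /eqP e2]]].
    * exists p; apply/setP => q; rewrite !inE.
      have hp : (p.1 == z) || (p.2 == z) by rewrite (_ : p.1 == z) //; apply/eqP/ord_inj.
      apply/andP/eqP => [[qM hq]|->]; first by rewrite (key q qM hq p pM hp).
      by rewrite pM hp.
    * exists p; apply/setP => q; rewrite !inE.
      have hp : (p.1 == z) || (p.2 == z) by rewrite (_ : p.2 == z) ?orbT //; apply/eqP/ord_inj.
      apply/andP/eqP => [[qM hq]|->]; first by rewrite (key q qM hq p pM hp).
      by rewrite pM hp.
Qed.


Definition phi a b x := x + (a < x) + (b <= x).
Definition psi a b x := x - (a.+1 < x) - (b.+1 < x).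

Definition insP (R : nat -> nat -> bool) a b u v :=
  ((u == a.+1) && (v == b.+1)) ||
  [&& u != a.+1, u != b.+1, v != a.+1, v != b.+1 & R (psi a b u) (psi a b v)].

Definition Jset n (M : {set arc n}) a b : {set arc n.+1} :=
  [set p : arc n.+1 | insP (inM M) a b (nat_of_ord p.1) (nat_of_ord p.2)].

Definition Dset n (M : {set arc n.+1}) a b : {set arc n} :=
  [set p : arc n | inM M (phi a b (nat_of_ord p.1)) (phi a b (nat_of_ord p.2))].

Lemma memJ n (M : {set arc n}) a b u v : a < b -> b <= n.*2 ->
  inM (Jset M a b) u v = insP (inM M) a b u v.
Proof.
move=> hab hb; rewrite inM_set; apply/and3P/idP => [[//]|h]; split=> //.
- case/orP: h => [/andP[/eqP -> _]|/and5P[_ _ _ _ /inM_bound]]; rewrite /psi; lia.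
- case/orP: h => [/andP[_ /eqP ->]|/and5P[_ _ _ _ /inM_bound]]; rewrite /psi; lia.
Qed.

Lemma memD n (M : {set arc n.+1}) a b s t :
  inM (Dset M a b) s t = [&& s < n.*2, t < n.*2 & inM M (phi a b s) (phi a b t)].
Proof. exact: (@inM_set n (fun x y => inM M (phi a b x) (phi a b y)) s t). Qed.

Lemma psi_phi a b x : a < b -> psi a b (phi a b x) = x.
Proof. rewrite /psi /phi; lia. Qed.
Lemma phi_psi a b u : a < b -> u != a.+1 -> u != b.+1 -> phi a b (psi a b u) = u.
Proof. rewrite /psi /phi; lia. Qed.

Lemma matchR_lt n (M : {set arc n}) x y : matchR M -> inM M x y -> x < y.
Proof. by case=> h _ _; apply: h. Qed.

Lemma matchR_uniq n (M : {set arc n}) x y u v : matchR M -> inM M x y -> inM M u v ->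
   [|| x == u, x == v, y == u | y == v] -> x = u /\ y = v.
Proof. by case=> _ _ h; apply: h. Qed.

Lemma Jset_match n (M : {set arc n}) a b : matchR M -> inM M a b -> matchR (Jset M a b).
Proof.
move=> hM hab; have ltab := matchR_lt hM hab; have [_ hb] := inM_bound hab.
have {}hb : b <= n.*2 := ltnW hb.
split.
- move=> u v; rewrite memJ //; case/orP => [/andP[/eqP -> /eqP ->]|/and5P[h1 h2 h3 h4 h5]]; first lia.
  have := matchR_lt hM h5; rewrite /psi; lia.
- move=> u hu.
  case: (boolP ((u == a.+1) || (u == b.+1))) => [/orP[/eqP->|/eqP->]|].
  + by exists b.+1; apply/orP; left; rewrite memJ // /insP !eqxx.
  + by exists a.+1; apply/orP; right; rewrite memJ // /insP !eqxx.
  rewrite negb_or => /andP[hu1 hu2].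
  have hpu : psi a b u < n.*2 by rewrite /psi; lia.
  case: hM => _ hT _; have [w hw] := hT _ hpu.
  exists (phi a b w); rewrite !memJ // /insP.
  have n1 : phi a b w != a.+1 by rewrite /phi; lia.
  have n2 : phi a b w != b.+1 by rewrite /phi; lia.
  rewrite hu1 hu2 n1 n2 psi_phi //.
  by case/orP: hw => ->; rewrite /= ?orbT.
- move=> x y u v; rewrite !memJ //.
  case/orP => [/andP[/eqP -> /eqP ->]|/and5P[hx1 hx2 hy1 hy2 hxy]];
  case/orP => [/andP[/eqP -> /eqP ->]|/and5P[hu1 hu2 hv1 hv2 huv]] //.
  + by case/or4P => /eqP e; subst; rewrite eqxx in hu1 hu2 hv1 hv2.
  + by case/or4P => /eqP e; subst; rewrite eqxx in hx1 hx2 hy1 hy2.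
  + move=> hs; have [e1 e2] := matchR_uniq hM hxy huv
      (ltac:(by case/or4P: hs => /eqP ->; rewrite eqxx ?orbT)).
    by rewrite -(phi_psi ltab hx1 hx2) -(phi_psi ltab hy1 hy2) e1 e2 !phi_psi.
Qed.

Lemma phi_neq1 a b x : a < b -> (phi a b x == a.+1) = false.
Proof. rewrite /phi; lia. Qed.
Lemma phi_neq2 a b x : a < b -> (phi a b x == b.+1) = false.
Proof. rewrite /phi; lia. Qed.

Lemma avoid_new n (M : {set arc n.+1}) a b x y : matchR M -> inM M a.+1 b.+1 -> inM M x y ->
  (x,y) != (a.+1,b.+1) -> [&& x != a.+1, x != b.+1, y != a.+1 & y != b.+1].
Proof.
move=> hM hab hxy hne.
have lt1 := matchR_lt hM hab; have lt2 := matchR_lt hM hxy.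
apply/and4P; split; apply/negP => /eqP e; subst;
  have [e1 e2] := matchR_uniq hM hxy hab (ltac:(by rewrite !eqxx ?orbT));
  subst; rewrite ?eqxx in hne; lia.
Qed.

Lemma Dset_match n (M : {set arc n.+1}) a b : matchR M -> inM M a.+1 b.+1 -> matchR (Dset M a b).
Proof.
move=> hM hab; have ltab := matchR_lt hM hab; have [_ hb] := inM_bound hab.
have ltab' : a < b by lia.
split.
- move=> s t; rewrite memD => /and3P[_ _ h]; have := matchR_lt hM h; rewrite /phi; lia.
- move=> s hs.
  have hps : phi a b s < (n.+1).*2 by rewrite /phi; lia.
  case: hM => hL hT hU; have [w hw] := hT _ hps.
  have hwn : (w != a.+1) && (w != b.+1).
    case/orP: hw => hw.
    + have hne : (phi a b s, w) != (a.+1, b.+1) by rewrite xpair_eqE phi_neq1.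
      by case/and4P: (@avoid_new n M a b _ _ (And3 hL hT hU) hab hw hne) => _ _ -> ->.
    + have hne : (w, phi a b s) != (a.+1, b.+1) by rewrite xpair_eqE phi_neq2 // andbF.
      by case/and4P: (@avoid_new n M a b _ _ (And3 hL hT hU) hab hw hne) => -> -> _ _.
  case/andP: hwn => hw1 hw2.
  have hwb : w < (n.+1).*2 by case/orP: hw => /inM_bound [].
  exists (psi a b w); rewrite !memD phi_psi // hs /=.
  have -> : psi a b w < n.*2 by rewrite /psi; move: hw1 hw2; rewrite !eqE /=; lia.
  by [].
- move=> x y u v; rewrite !memD => /and3P[_ _ hxy] /and3P[_ _ huv] hs.
  have [e1 e2] := matchR_uniq hM hxy huv
      (ltac:(by case/or4P: hs => /eqP ->; rewrite eqxx ?orbT)).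
  by split; [rewrite -(psi_phi x ltab') e1 psi_phi | rewrite -(psi_phi y ltab') e2 psi_phi].
Qed.

Lemma ins_del n (M : {set arc n.+1}) a b : matchR M -> inM M a.+1 b.+1 ->
  Jset (Dset M a b) a b = M.
Proof.
move=> hM hab; have ltab := matchR_lt hM hab; have [_ hb] := inM_bound hab.
have ltab' : a < b by lia.
have hb' : b <= n.*2 by lia.
apply: set_ext2 => u v; rewrite memJ //.
rewrite /insP memD; apply/idP/idP.
- case/orP => [/andP[/eqP -> /eqP ->] //|/and5P[hu1 hu2 hv1 hv2 /and3P[_ _]]].
  by rewrite !phi_psi.
- move=> huv; case: (boolP ((u,v) == (a.+1,b.+1))) => [/eqP[-> ->]|hne]; first by rewrite !eqxx.
  have /and4P[hu1 hu2 hv1 hv2] := avoid_new hM hab huv hne.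
  have [hu hv] := inM_bound huv.
  rewrite hu1 hu2 hv1 hv2 !phi_psi // huv /= andbT orbC /=.
  move: hu1 hu2 hv1 hv2; rewrite !eqE /= /psi; lia.
Qed.

Lemma del_ins n (M : {set arc n}) a b : matchR M -> inM M a b -> Dset (Jset M a b) a b = M.
Proof.
move=> hM hab; have ltab := matchR_lt hM hab; have [_ hb] := inM_bound hab.
have {}hb : b <= n.*2 := ltnW hb.
apply: set_ext2 => s t; rewrite memD memJ // /insP !phi_neq1 // !phi_neq2 // !psi_phi //=.
by apply/idP/idP => [/and3P[_ _ ->]//|h]; have [-> ->] := inM_bound h.
Qed.


Definition hasP n (M : {set arc n}) x y := (0 < x) && inM M x.-1 y.+1.
Definition hasPP n (M : {set arc n}) x y := hasP M x y && hasP M x.-1 y.+1.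

Lemma arith1 a b x y : a < b -> x != a.+1 -> x != b -> y != a -> y.+1 != b -> x < y ->
   ((phi a b x).-1 == a.+1) = false /\ ((phi a b x).-1 == b.+1) = false /\
       ((phi a b y).+1 == a.+1) = false /\ ((phi a b y).+1 == b.+1) = false /\
       psi a b (phi a b x).-1 = x.-1 /\ psi a b (phi a b y).+1 = y.+1
     /\ (0 < phi a b x) = (0 < x).
Proof.
move=> h1 h2 h3 h4 h5 h6; rewrite /phi /psi.
move: h2 h3 h4 h5; rewrite !eqE /= => h2 h3 h4 h5.
do ! split; try (apply/negbTE; lia); try lia.

Qed.

Lemma arith2 a b x y : a < b -> x != a.+1 -> x != b -> y != a -> y.+1 != b -> 0 < x -> x < y ->
  (phi a b x).-1 = phi a b x.-1 /\ (phi a b y).+1 = phi a b y.+1.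
Proof. move=> h1 h2 h3 h4 h5 h6 h7; move: h2 h3 h4 h5; rewrite /phi !eqE /=; lia. Qed.

Section Stats.
Variables (n : nat) (M : {set arc n}) (a b : nat).
Hypotheses (hM : matchR M) (hab : inM M a b).

Let ltab := matchR_lt hM hab.
Let hb : b <= n.*2. Proof. by have [_ /ltnW] := inM_bound hab. Qed.

Lemma U1 x y : inM M x y -> x != b.
Proof.
move=> h; apply/eqP => e; subst.
have [e1 _] := matchR_uniq hM h hab (ltac:(by rewrite eqxx ?orbT)); lia.
Qed.
Lemma U2 x y : inM M x y -> y != a.
Proof.
move=> h; apply/eqP => e; subst.
have [_ e2] := matchR_uniq hM h hab (ltac:(by rewrite eqxx ?orbT)); have := matchR_lt hM h; lia.
Qed.

Lemma F2 : hasP (Jset M a b) a.+1 b.+1.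
Proof.
rewrite /hasP /= memJ // /insP.
have -> : psi a b a = a by rewrite /psi; lia.
have -> : psi a b b.+2 = b by rewrite /psi; lia.
rewrite hab; apply/orP; right; apply/and5P; split => //; rewrite eqE /=; lia.
Qed.

Lemma F1 x y : inM M x y -> hasP (Jset M a b) (phi a b x) (phi a b y) = hasP M x y.
Proof.
move=> hxy; have lxy := matchR_lt hM hxy.
have u1 := U1 hxy; have u2 := U2 hxy.
rewrite /hasP memJ //.
case: (eqVneq x a.+1) => [ex|nx].
  subst x.
  have -> : phi a b a.+1 = a.+2 by move: u1; rewrite /phi eqE /=; lia.
  rewrite /= /insP eqxx /= orbF.
  apply/eqP/idP => [e|h].
    have -> : y.+1 = b by move: e; rewrite /phi; lia.
    exact: hab.
  have [_ e] := matchR_uniq hM h hab (ltac:(by rewrite eqxx)).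
  rewrite /phi; lia.
case: (eqVneq y.+1 b) => [ey|ny].
  have -> : (0 < x) && inM M x.-1 y.+1 = false.
    apply/negbTE/negP => /andP[x0]; rewrite ey => h.
    have [e _] := matchR_uniq hM h hab (ltac:(by rewrite eqxx ?orbT)); lia.
  rewrite /insP.
  have -> : ((phi a b y).+1 == b.+1) = true by apply/eqP; rewrite /phi; lia.
  have -> : ((phi a b x).-1 == a.+1) = false by apply/negbTE; move: nx u1; rewrite /phi !eqE /=; lia.
  by rewrite /= !andbF.
have [h1 [h2 [h3 [h4 [h5 [h6 h7]]]]]] := arith1 ltab nx u1 u2 ny lxy.
by rewrite /insP h1 h2 h3 h4 h5 h6 h7 /=.
Qed.

Lemma F3 x y : inM M x y ->
  hasPP (Jset M a b) (phi a b x) (phi a b y) = hasPP M x y || ((x == a.+1) && (y.+1 == b)).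
Proof.
move=> hxy; have lxy := matchR_lt hM hxy.
rewrite /hasPP F1 //.
case: (boolP ((x == a.+1) && (y.+1 == b))) => [/andP[/eqP ex /eqP ey]|hne].
  subst x.
  have hP : hasP M a.+1 y by rewrite /hasP /= ey.
  rewrite hP orbT andTb.
  have -> : (phi a b a.+1).-1 = a.+1 by rewrite /phi; lia.
  have -> : (phi a b y).+1 = b.+1 by rewrite /phi; lia.
  exact: F2.
rewrite orbF; case: (boolP (hasP M x y)) => //= hP.
case/andP: (hP) => x0 hpar.
have nx : x != a.+1.
  apply/eqP => ex; subst x; move: hne; rewrite eqxx /= => /eqP; apply.
  have [_ e] := matchR_uniq hM hpar hab (ltac:(by rewrite /= eqxx)); by [].
have ny : y.+1 != b.
  apply/eqP => ey; move: hne; rewrite ey eqxx andbT => /eqP; apply.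
  have [e _] := matchR_uniq hM hpar hab (ltac:(by rewrite ey eqxx ?orbT)); lia.
have [-> ->] := arith2 ltab nx (U1 hxy) (U2 hxy) ny x0 lxy.
exact: F1.
Qed.

Lemma F4 : hasPP (Jset M a b) a.+1 b.+1 = hasP M a b.
Proof.
rewrite /hasPP F2 /=.
have := F1 hab.
have -> : phi a b a = a by rewrite /phi; lia.
by have -> : phi a b b = b.+2 by rewrite /phi; lia.
Qed.

End Stats.


Ltac dlia := repeat match goal with p : Defs.arc _ |- _ => destruct p | p : prod _ _ |- _ => destruct p end; simpl in *; lia.

Lemma card_sum (T : finType) (A : {set T}) (Q : pred T) :
  #|[set p in A | Q p]| = \sum_(p in A) (Q p : nat).
Proof.
rewrite -sum1_card big_mkcond [RHS]big_mkcond /=; apply: eq_bigr => p _.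
by rewrite !inE; case: (p \in A); case: (Q p).
Qed.

Lemma arc_eq n (p q : arc n) : nat_of_ord p.1 = nat_of_ord q.1 -> nat_of_ord p.2 = nat_of_ord q.2 -> p = q.
Proof. by case: p q => [p1 p2] [q1 q2] /= e1 e2; congr pair; apply: val_inj. Qed.

Lemma inMP n (M : {set arc n}) x y :
  reflect (exists2 p, p \in M & (nat_of_ord p.1 = x /\ nat_of_ord p.2 = y)) (inM M x y).
Proof.
apply: (iffP existsP) => [[p /andP[pM /andP[/eqP e1 /eqP e2]]]|[p pM [e1 e2]]].
  by exists p.
by exists p; rewrite /= pM e1 e2 !eqxx.
Qed.

Lemma occ21E n (M : {set arc n}) : occ21 M = #|[set p in M | hasP M p.1 p.2]|.
Proof.
rewrite /occ21.
set S := [set pq : arc n * arc n | _].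
rewrite -(@card_in_imset _ _ snd S).
  apply: eq_card => p; rewrite inE.
  apply/imsetP/andP => [[[q r]]|[pM /andP[x0 /inMP[q qM [e1 e2]]]]].
    rewrite inE /= => /and4P[qM rM /eqP e1 /eqP e2] ->.
    split=> //; rewrite /hasP e1 /=; apply/inMP; exists q => //; split=> //; dlia.
  exists (q, p) => //; rewrite inE /= qM pM /=; apply/andP; split; apply/eqnP; dlia.
move=> [q r] [q' r'] /=; rewrite !inE /= => /and4P[_ _ /eqP e1 /eqP e2] /and4P[_ _ /eqP e1' /eqP e2'] er.
subst r'; congr pair; apply: arc_eq; dlia.
Qed.

Lemma occ321E n (M : {set arc n}) : occ321 M = #|[set p in M | hasPP M p.1 p.2]|.
Proof.
rewrite /occ321.
set S := [set t : arc n * arc n * arc n | _].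
rewrite -(@card_in_imset _ _ snd S).
  apply: eq_card => p; rewrite inE.
  apply/imsetP/andP => [[[[q r] t]]|[pM /andP[/andP[x0 /inMP[r rM [e1 e2]]] /andP[x1 /inMP[q qM [e3 e4]]]]]].
    rewrite inE /= => /and5P[qM rM tM /eqP e1 /andP[/eqP e2 /andP[/eqP e3 /eqP e4]]] ->.
    split=> //; rewrite /hasPP /hasP; apply/andP; split; apply/andP; split; try dlia.
      by apply/inMP; exists r => //; split; dlia.
    by apply/inMP; exists q => //; split; dlia.
  exists (q, r, p) => //; rewrite inE /= qM rM pM /=.
  by apply/and4P; split; apply/eqnP; dlia.
move=> [[q r] t] [[q' r'] t'] /=; rewrite !inE /=.
move=> /and5P[_ _ _ /eqP e1 /andP[/eqP e2 /andP[/eqP e3 /eqP e4]]].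
move=> /and5P[_ _ _ /eqP e1' /andP[/eqP e2' /andP[/eqP e3' /eqP e4']]] et.
subst t'; congr pair; first congr pair; apply: arc_eq; dlia.
Qed.

Lemma sum_eq1 N (x : 'I_N) : \sum_(z : 'I_N) ((x == z) : nat) = 1.
Proof. by rewrite (bigD1 x) //= eqxx big1 // => z /negbTE; rewrite eq_sym => ->. Qed.

Lemma card_match n (M : {set arc n}) : is_matching M -> #|M| = n.
Proof.
case/andP => /forallP h1 /forallP h2.
have E : \sum_(z : 'I_(n.*2)) #|[set p in M | (p.1 == z) || (p.2 == z)]| = n.*2.
  by rewrite (eq_bigr (fun _ => 1)) ?sum1_card ?card_ord // => z _; apply/eqP/h2.
have E2 : \sum_(z : 'I_(n.*2)) #|[set p in M | (p.1 == z) || (p.2 == z)]| = (#|M|).*2.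
  rewrite (eq_bigr (fun z => \sum_(p in M) (((p.1 == z) || (p.2 == z)) : nat))); last first.
    by move=> z _; rewrite card_sum.
  rewrite exchange_big -sum1_card -[RHS]muln2 big_distrl; apply: eq_bigr => p pM.
  have hp := h1 p; rewrite pM in hp.
  have ne : p.2 != p.1 by rewrite neq_ltn (implyP hp isT) orbT.
  rewrite (eq_bigr (fun z => (p.1 == z) + (p.2 == z))); last first.
    move=> z _; case: (eqVneq p.1 z) => [<-|]; last by case: (p.2 == z).
    by rewrite (negbTE ne).
  by rewrite big_split !sum_eq1.
by apply: double_inj; rewrite -E2 E.
Qed.


Lemma inordK2 n x : x < (n.+1).*2 -> nat_of_ord (inord x : 'I_((n.+1).*2)) = x.
Proof. exact: inordK. Qed.

Definition phiA n a b (p : arc n) : arc n.+1 :=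
  (inord (phi a b p.1), inord (phi a b p.2)).

Lemma phi_lt n a b x : x < n.*2 -> phi a b x < (n.+1).*2.
Proof. rewrite /phi; lia. Qed.

Lemma phiA1 n a b (p : arc n) : nat_of_ord (phiA a b p).1 = phi a b p.1.
Proof. by rewrite /= inordK // phi_lt. Qed.
Lemma phiA2 n a b (p : arc n) : nat_of_ord (phiA a b p).2 = phi a b p.2.
Proof. by rewrite /= inordK // phi_lt. Qed.

Lemma CJ n (M : {set arc n}) a b (PJ PM : nat -> nat -> bool) : matchR M -> inM M a b ->
 (forall x y, inM M x y -> PJ (phi a b x) (phi a b y) = PM x y) ->
 #|[set p in Jset M a b | PJ p.1 p.2]| = #|[set p in M | PM p.1 p.2]| + PJ a.+1 b.+1.
Proof.
move=> hM hab hP.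
have ltab := matchR_lt hM hab; have [ha hb] := inM_bound hab.
have hb' : b <= n.*2 := ltnW hb.
pose newA : arc n.+1 := (inord a.+1, inord b.+1).
have nA1 : nat_of_ord newA.1 = a.+1 by rewrite /= inordK2 //; lia.
have nA2 : nat_of_ord newA.2 = b.+1 by rewrite /= inordK2 //; lia.
have hnew : newA \in Jset M a b by rewrite -inME nA1 nA2 memJ // /insP !eqxx.
rewrite (cardsD1 newA) inE hnew nA1 nA2 /= addnC; congr (_ + _).
rewrite -(@card_in_imset _ _ (phiA a b) [set p in M | PM p.1 p.2]).
  apply: eq_card => p; rewrite !inE.
  apply/andP/imsetP => [[hpn /andP[pJ hPJ]]|[q]].
    rewrite /insP in pJ.
    case/orP: pJ => [/andP[/eqP e1 /eqP e2]|/and5P[h1 h2 h3 h4 /inMP[q qM [e1 e2]]]].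
      by move: hpn; rewrite (_ : p = newA) ?eqxx //; apply: arc_eq; [exact: (etrans e1 (esym nA1)) | exact: (etrans e2 (esym nA2))].
    exists q; first by rewrite inE qM /= -hP ?inME // e1 e2 !phi_psi.
    by apply: arc_eq; [rewrite phiA1 e1 phi_psi | rewrite phiA2 e2 phi_psi].
  rewrite inE => /andP[qM hq] ->; split.
    apply/eqP => /(congr1 (fun p : arc n.+1 => nat_of_ord p.1)).
    by rewrite phiA1 nA1 => /eqP; rewrite phi_neq1.
  rewrite phiA1 phiA2 /insP !phi_neq1 // !phi_neq2 // !psi_phi //= inME qM /=.
  by rewrite hP // inME.
move=> p q; rewrite !inE => /andP[pM _] /andP[qM _] /(congr1 (fun r : arc n.+1 => (nat_of_ord r.1, nat_of_ord r.2))).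
rewrite /= !inordK ?phi_lt // => [[e1 e2]].
by apply: arc_eq; [rewrite -(psi_phi p.1 ltab) e1 psi_phi | rewrite -(psi_phi p.2 ltab) e2 psi_phi].
Qed.

Lemma occ21_J n (M : {set arc n}) a b : matchR M -> inM M a b ->
  occ21 (Jset M a b) = (occ21 M).+1.
Proof.
move=> hM hab; rewrite !occ21E (CJ (PM := hasP M)) //; last by move=> x y; apply: F1.
by rewrite F2 // addn1.
Qed.

Lemma occ321_J n (M : {set arc n}) a b : matchR M -> inM M a b ->
  occ321 (Jset M a b) = occ321 M + hasP M a b + (~~ hasP M a b && inM M a.+1 b.-1).
Proof.
move=> hM hab; have ltab := matchR_lt hM hab.
rewrite !occ321E (CJ (PM := fun x y => hasPP M x y || ((x == a.+1) && (y.+1 == b)))) //;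
  last by move=> x y; apply: F3.
rewrite F4 // -addnA [hasP M a b + _]addnC addnA; congr (_ + _).
have -> : #|[set p in M | hasPP M p.1 p.2 || (nat_of_ord p.1 == a.+1) && ((nat_of_ord p.2).+1 == b)]| =
   #|[set p in M | hasPP M p.1 p.2]| + #|[set p in M | (nat_of_ord p.1 == a.+1) && ((nat_of_ord p.2).+1 == b) && ~~ hasP M a b]|.
  rewrite !card_sum -big_split /=; apply: eq_bigr => p pM.
  case: (boolP ((nat_of_ord p.1 == a.+1) && ((nat_of_ord p.2).+1 == b))) => [/andP[/eqP e1 /eqP e2]|]; last first.
    by move=> _; rewrite orbF addn0.
  have -> : hasPP M p.1 p.2 = hasP M a b.
    rewrite /hasPP /hasP e1 e2 /= hab /=; congr ((0 < _) && _); lia.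
  by case: (hasP M a b).
congr (_ + _).
case: (boolP (hasP M a b)) => hP /=.
  apply/eqP; rewrite cards_eq0; apply/eqP/setP => p; rewrite !inE /=; by rewrite !andbF.
case: (boolP (inM M a.+1 b.-1)) => [/inMP[q qM [e1 e2]]|hn].
  apply/eqP/cards1P; exists q; apply/setP => p; rewrite !inE andbT.
  apply/andP/eqP => [[pM /andP[/eqnP f1 /eqnP f2]]|->]; last by split => //; rewrite e1 eqxx /=; rewrite e2; apply/eqnP; lia.
  by apply: (@arc_eq n); dlia.
apply/eqP; rewrite cards_eq0; apply/eqP/setP => p; rewrite !inE andbT.
apply/negP => /andP[pM /andP[/eqnP f1 /eqnP f2]]; move: hn; apply/negP/negPn/inMP.
by exists p => //; split; dlia.
Qed.


Definition childA n (p : arc n) : arc n := (insubd p.1 (nat_of_ord p.1).+1, insubd p.2 (nat_of_ord p.2).-1).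

Lemma childA1 n (p : arc n) : (nat_of_ord p.1).+1 < n.*2 -> nat_of_ord (childA p).1 = (nat_of_ord p.1).+1.
Proof. by move=> h; rewrite /= (val_insubd p.1 (nat_of_ord p.1).+1) h. Qed.
Lemma childA2 n (p : arc n) : nat_of_ord (childA p).2 = (nat_of_ord p.2).-1.
Proof.
rewrite /= (val_insubd p.2 (nat_of_ord p.2).-1).
by case: ifP => // /negbT; rewrite -leqNgt; have := ltn_ord p.2; lia.
Qed.

Lemma heads_count n (M : {set arc n}) s : is_matching M -> occ21 M = s -> occ321 M = 0 ->
  #|[set p in M | ~~ hasP M p.1 p.2 && ~~ inM M (nat_of_ord p.1).+1 (nat_of_ord p.2).-1]| = n - s - s.
Proof.
move=> hm h21 h321; have hM := proj1 (matchingP M) hm.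
set C := [set p in M | inM M (nat_of_ord p.1).+1 (nat_of_ord p.2).-1].
have hC : #|C| = s.
  rewrite -h21 occ21E -(@card_in_imset _ _ (@childA n) C).
    apply: eq_card => q; rewrite !inE; apply/imsetP/andP => [[p]|[qM /andP[q0 /inMP[r rM [e1 e2]]]]].
      rewrite inE => /andP[pM /inMP[q' qM' [e1 e2]]] ->.
      have [b1 _] := inM_bound (introT (inMP M _ _) (ex_intro2 _ _ q' qM' (conj e1 e2))).
      have -> : childA p = q' by apply: (@arc_eq n); rewrite ?childA1 ?childA2 ?e1 ?e2.
      rewrite qM' /hasP e1 e2 /=.
      have hp := matchR_lt hM (introT (inMP M _ _) (ex_intro2 _ _ p pM (conj erefl erefl))).
      by rewrite (_ : (nat_of_ord p.2).-1.+1 = p.2) ?inME //; lia.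
    exists r.
      rewrite inE rM /=; apply/inMP; exists q => //; split; dlia.
    have [b1 _] := inM_bound (introT (inMP M _ _) (ex_intro2 _ _ q qM (conj erefl erefl))).
    by apply: (@arc_eq n); rewrite ?childA1 ?childA2 ?e1 ?e2 //; dlia.
  move=> p p'; rewrite !inE => /andP[pM /inMP[q qM [e1 e2]]] /andP[pM' /inMP[q' qM' [e1' e2']]] E.
  have [b1 _] := inM_bound (introT (inMP M _ _) (ex_intro2 _ _ q qM (conj e1 e2))).
  have [b1' _] := inM_bound (introT (inMP M _ _) (ex_intro2 _ _ q' qM' (conj e1' e2'))).
  have E1 := congr1 (fun r : arc n => nat_of_ord r.1) E.
  have E2 := congr1 (fun r : arc n => nat_of_ord r.2) E.
  rewrite /= in E1 E2; rewrite !childA1 // !childA2 in E1 E2.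
  have hp := matchR_lt hM (introT (inMP M _ _) (ex_intro2 _ _ p pM (conj erefl erefl))).
  have hp' := matchR_lt hM (introT (inMP M _ _) (ex_intro2 _ _ p' pM' (conj erefl erefl))).
  apply: (@arc_eq n); dlia.
have hPC : forall p, p \in M -> ~~ (hasP M p.1 p.2 && inM M (nat_of_ord p.1).+1 (nat_of_ord p.2).-1).
  move=> p pM; apply/negP => /andP[hP /inMP[q qM [e1 e2]]].
  have hp := matchR_lt hM (introT (inMP M _ _) (ex_intro2 _ _ p pM (conj erefl erefl))).
  move/eqP: h321; rewrite occ321E cards_eq0 => /eqP/setP/(_ q); rewrite !inE qM /=.
  rewrite /hasPP /hasP e1 e2 /=.
  have -> : (nat_of_ord p.2).-1.+1 = p.2 by lia.
  by rewrite inME pM /=; move: hP; rewrite /hasP => ->.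
have := card_match hm; rewrite -sum1_card => hn.
have : \sum_(p in M) 1 = #|[set p in M | ~~ hasP M p.1 p.2 && ~~ inM M (nat_of_ord p.1).+1 (nat_of_ord p.2).-1]| + #|[set p in M | hasP M p.1 p.2]| + #|C|.
  rewrite !card_sum -!big_split /=; apply: eq_bigr => p pM.
  by move: (hPC p pM); case: (hasP _ _ _); case: (inM _ _ _).
rewrite -occ21E h21 hC; lia.
Qed.


Lemma card_pairs (T1 T2 : finType) (S : {set T1}) (F : T1 -> {set T2}) :
  #|[set X : T1 * T2 | (X.1 \in S) && (X.2 \in F X.1)]| = \sum_(x in S) #|F x|.
Proof.
have -> : #|[set X : T1 * T2 | (X.1 \in S) && (X.2 \in F X.1)]| =
   \sum_(X : T1 * T2) (((X.1 \in S) && (X.2 \in F X.1)) : nat).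
  by rewrite -sum1_card big_mkcond /=; apply: eq_bigr => X _; rewrite inE; case: (_ && _).
rewrite -(pair_bigA _ (fun x y => ((x \in S) && (y \in F x)) : nat)) /=.
rewrite [RHS]big_mkcond /=; apply: eq_bigr => x _.
case: (boolP (x \in S)) => xS.
  by rewrite -sum1_card [RHS]big_mkcond /=; apply: eq_bigr => y _; case: (y \in F x).
by rewrite big1.
Qed.

Definition fJ n (X : {set arc n} * arc n) : {set arc n.+1} * arc n.+1 :=
  (Jset X.1 X.2.1 X.2.2, (inord (nat_of_ord X.2.1).+1, inord (nat_of_ord X.2.2).+1)).

Lemma transfer n (A : {set {set arc n.+1} * arc n.+1}) (B : {set {set arc n} * arc n}) :
 (forall X, X \in B -> [/\ matchR X.1, X.2 \in X.1 & fJ X \in A]) ->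
 (forall Y, Y \in A -> exists2 X, X \in B & fJ X = Y) -> #|A| = #|B|.
Proof.
move=> hB hA.
rewrite -(@card_in_imset _ _ (@fJ n) B).
  apply: eq_card => Y; apply/idP/imsetP => [/hA [X XB <-]|[X XB ->]]; first by exists X.
  by case: (hB X XB).
move=> [M e] [M' e'] /hB [hM he _] /hB [hM' he' _] /= E.
have E2 := congr1 snd E; simpl in E2.
have E21 := congr1 (fun p : arc n.+1 => nat_of_ord p.1) E2.
have E22 := congr1 (fun p : arc n.+1 => nat_of_ord p.2) E2.
have b1 : (nat_of_ord e.1).+1 < (n.+1).*2 by have := ltn_ord e.1; lia.
have b2 : (nat_of_ord e.2).+1 < (n.+1).*2 by have := ltn_ord e.2; lia.
have b3 : (nat_of_ord e'.1).+1 < (n.+1).*2 by have := ltn_ord e'.1; lia.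
have b4 : (nat_of_ord e'.2).+1 < (n.+1).*2 by have := ltn_ord e'.2; lia.
simpl in E21, E22; rewrite !inordK2 // in E21 E22.
have ee : e = e' by apply: (@arc_eq n); lia.
subst e'; congr pair.
have E1 := congr1 fst E; simpl in E1.
simpl in hM, hM', he, he'.
have h1 : inM M e.1 e.2 by rewrite inME.
have h2 : inM M' e.1 e.2 by rewrite inME.
by rewrite -(del_ins hM h1) -(del_ins hM' h2) E1.
Qed.

Lemma fJ_new n (M' : {set arc n}) (e' : arc n) : matchR M' -> e' \in M' ->
  [/\ (fJ (M', e')).2 \in (fJ (M',e')).1, nat_of_ord (fJ (M',e')).2.1 = (nat_of_ord e'.1).+1
    & nat_of_ord (fJ (M',e')).2.2 = (nat_of_ord e'.2).+1].
Proof.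
move=> hM he.
have hab : inM M' e'.1 e'.2 by rewrite inME.
have ltab := matchR_lt hM hab.
have b1 : (nat_of_ord e'.1).+1 < (n.+1).*2 by have := ltn_ord e'.1; lia.
have b2 : (nat_of_ord e'.2).+1 < (n.+1).*2 by have := ltn_ord e'.2; lia.
have v1 : nat_of_ord (fJ (M',e')).2.1 = (nat_of_ord e'.1).+1 by exact: inordK2.
have v2 : nat_of_ord (fJ (M',e')).2.2 = (nat_of_ord e'.2).+1 by exact: inordK2.
split => //.
rewrite -inME v1 v2.
change (fJ (M', e')).1 with (Jset M' e'.1 e'.2).
have hb : nat_of_ord e'.2 <= n.*2 := ltnW (ltn_ord _).
by rewrite memJ // /insP !eqxx.
Qed.


Lemma fJ_pre n (M : {set arc n.+1}) (e : arc n.+1) : matchR M -> e \in M -> hasP M e.1 e.2 ->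
  exists e' : arc n, [/\ nat_of_ord e'.1 = (nat_of_ord e.1).-1, nat_of_ord e'.2 = (nat_of_ord e.2).-1,
     matchR (Dset M e'.1 e'.2), e' \in Dset M e'.1 e'.2 & fJ (Dset M e'.1 e'.2, e') = (M, e)].
Proof.
move=> hM he /andP[c0 hpar].
have hcd : inM M e.1 e.2 by rewrite inME.
have lcd := matchR_lt hM hcd.
have [_ bd] := inM_bound hpar.
have h1 : (nat_of_ord e.1).-1 < n.*2 by lia.
have h2 : (nat_of_ord e.2).-1 < n.*2 by lia.
exists (Ordinal h1, Ordinal h2) => /=.
have hcd' : inM M (nat_of_ord e.1).-1.+1 (nat_of_ord e.2).-1.+1.
  by rewrite !prednK //; lia.
have hD := Dset_match hM hcd'.
split => //.
- rewrite -inME /= memD h1 h2 /=.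
  have -> : phi (nat_of_ord e.1).-1 (nat_of_ord e.2).-1 (nat_of_ord e.1).-1 = (nat_of_ord e.1).-1 by rewrite /phi; lia.
  have -> : phi (nat_of_ord e.1).-1 (nat_of_ord e.2).-1 (nat_of_ord e.2).-1 = (nat_of_ord e.2).+1 by rewrite /phi; lia.
  exact: hpar.
- rewrite /fJ /= ins_del //; congr pair.
  apply: (@arc_eq n.+1); rewrite /= inordK2 ?prednK //; lia.
Qed.


Definition SD n s k := [set M : {set arc n} | [&& is_matching M, occ21 M == s + k & occ321 M == k]].
Definition Dn n s k := #|SD n s k|.

Lemma inSD n s k (M : {set arc n}) :
  (M \in SD n s k) = [&& is_matching M, occ21 M == s + k & occ321 M == k].
Proof. by rewrite in_set. Qed.

Lemma inPair (T1 T2 : finType) (S : {set T1}) (F : T1 -> {set T2}) (X : T1 * T2) :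
  (X \in [set X : T1 * T2 | (X.1 \in S) && (X.2 \in F X.1)]) = (X.1 \in S) && (X.2 \in F X.1).
Proof. by rewrite in_set. Qed.

Lemma inSel (T : finType) (M : {set T}) (P : pred T) x :
  (x \in [set p in M | P p]) = (x \in M) && P x.
Proof. by rewrite in_set. Qed.

Lemma R1 n s k : k.+1 * Dn n.+1 s k.+1 = (s + k) * Dn n s k.
Proof.
have cA : #|[set Y : {set arc n.+1} * arc n.+1 | (Y.1 \in SD n.+1 s k.+1) && (Y.2 \in [set p in Y.1 | hasPP Y.1 p.1 p.2])]| = k.+1 * Dn n.+1 s k.+1.
  rewrite (@card_pairs _ _ (SD n.+1 s k.+1) (fun M : {set arc n.+1} => [set p in M | hasPP M p.1 p.2])) (eq_bigr (fun _ => k.+1)); first by rewrite sum_nat_const mulnC.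
  by move=> M; rewrite inSD => /and3P[_ _ /eqP <-]; rewrite occ321E.
have cB : #|[set X : {set arc n} * arc n | (X.1 \in SD n s k) && (X.2 \in [set p in X.1 | hasP X.1 p.1 p.2])]| = (s + k) * Dn n s k.
  rewrite (@card_pairs _ _ (SD n s k) (fun M : {set arc n} => [set p in M | hasP M p.1 p.2])) (eq_bigr (fun _ => s + k)); first by rewrite sum_nat_const mulnC.
  by move=> M; rewrite inSD => /and3P[_ /eqP <- _]; rewrite occ21E.
rewrite -cA -cB; apply: transfer.
- move=> [M' e']; rewrite in_set /= inSD inSel /= => /andP[/and3P[hm /eqP h21 /eqP h321] /andP[e'M hP]].
  have hM := proj1 (matchingP M') hm.
  have hab : inM M' e'.1 e'.2 by rewrite inME.
  have [hn v1 v2] := fJ_new hM e'M.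
  split => //; rewrite in_set /= inSD inSel; apply/andP; split.
    apply/and3P; split.
    + by apply/matchingP; apply: Jset_match.
    + by rewrite occ21_J // h21 addnS.
    + by rewrite occ321_J // hP /= h321 addn0 addn1.
  apply/andP; split; first exact: hn.
  by rewrite v1 v2 F4.
- move=> [M e]; rewrite in_set /= inSD inSel /= => /andP[/and3P[hm /eqP h21 /eqP h321] /andP[eM hPP]].
  have hM := proj1 (matchingP M) hm.
  have hP : hasP M e.1 e.2 by case/andP: hPP.
  have [e' [v1 v2 hD he' E]] := fJ_pre hM eM hP.
  exists (Dset M e'.1 e'.2, e') => //.
  have hab : inM (Dset M e'.1 e'.2) e'.1 e'.2 by rewrite inME.
  have hJ : Jset (Dset M e'.1 e'.2) e'.1 e'.2 = M by have := congr1 fst E.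
  have hP' : hasP (Dset M e'.1 e'.2) e'.1 e'.2.
    case/andP: hPP => /andP[c0 _] /andP[c1 hgp].
    have [_ bd] := inM_bound hgp.
    have lcd := matchR_lt hM (introT (inMP M _ _) (ex_intro2 _ _ e eM (conj erefl erefl))).
    rewrite /hasP v1 v2 memD.
    apply/andP; split; first exact: c1.
    apply/and3P; split; [move: lcd bd c0 c1; clear; dlia | move: lcd bd; clear; dlia | ].
    have -> : phi (nat_of_ord e.1).-1 (nat_of_ord e.2).-1 (nat_of_ord e.1).-1.-1 = (nat_of_ord e.1).-1.-1 by rewrite /phi; move: c0 c1 lcd; clear; dlia.
    have -> : phi (nat_of_ord e.1).-1 (nat_of_ord e.2).-1 (nat_of_ord e.2).-1.+1 = (nat_of_ord e.2).+1.+1 by rewrite /phi; move: c0 c1 lcd; clear; dlia.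
    exact: hgp.
  rewrite in_set /= inSD inSel /=; apply/andP; split.
    apply/and3P; split.
    + by apply/matchingP.
    + by rewrite -hJ occ21_J // addnS in h21; case: h21 => ->.
    + by rewrite -hJ occ321_J // hP' /= addn0 addn1 in h321; case: h321 => ->.
  by rewrite he' hP'.
Qed.

Lemma R2 n s : s.+1 * Dn n.+1 s.+1 0 = (n - s - s) * Dn n s 0.
Proof.
have cA : #|[set Y : {set arc n.+1} * arc n.+1 | (Y.1 \in SD n.+1 s.+1 0) && (Y.2 \in [set p in Y.1 | hasP Y.1 p.1 p.2])]| = s.+1 * Dn n.+1 s.+1 0.
  rewrite (@card_pairs _ _ (SD n.+1 s.+1 0) (fun M : {set arc n.+1} => [set p in M | hasP M p.1 p.2])) (eq_bigr (fun _ => s.+1)); first by rewrite sum_nat_const mulnC.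
  by move=> M; rewrite inSD addn0 => /and3P[_ /eqP <- _]; rewrite occ21E.
have cB : #|[set X : {set arc n} * arc n | (X.1 \in SD n s 0) && (X.2 \in [set p in X.1 | ~~ hasP X.1 p.1 p.2 && ~~ inM X.1 (nat_of_ord p.1).+1 (nat_of_ord p.2).-1])]| = (n - s - s) * Dn n s 0.
  rewrite (@card_pairs _ _ (SD n s 0) (fun M : {set arc n} => [set p in M | ~~ hasP M p.1 p.2 && ~~ inM M (nat_of_ord p.1).+1 (nat_of_ord p.2).-1])) (eq_bigr (fun _ => n - s - s)); first by rewrite sum_nat_const mulnC.
  move=> M; rewrite inSD addn0 => /and3P[hm /eqP h21 /eqP h321].
  exact: heads_count.
rewrite -cA -cB; apply: transfer.
- move=> [M' e']; rewrite in_set /= inSD inSel /= => /andP[/and3P[hm /eqP h21 /eqP h321] /andP[e'M /andP[hP hC]]].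
  have hM := proj1 (matchingP M') hm.
  have hab : inM M' e'.1 e'.2 by rewrite inME.
  have [hn v1 v2] := fJ_new hM e'M.
  split => //; rewrite in_set /= inSD inSel; apply/andP; split.
    apply/and3P; split.
    + by apply/matchingP; apply: Jset_match.
    + by rewrite occ21_J // h21 !addn0.
    + by rewrite occ321_J // (negbTE hP) (negbTE hC) h321.
  apply/andP; split; first exact: hn.
  by rewrite v1 v2 F2.
- move=> [M e]; rewrite in_set /= inSD inSel /= => /andP[/and3P[hm /eqP h21 /eqP h321] /andP[eM hP]].
  have hM := proj1 (matchingP M) hm.
  have [e' [v1 v2 hD he' E]] := fJ_pre hM eM hP.
  exists (Dset M e'.1 e'.2, e') => //.
  have hab : inM (Dset M e'.1 e'.2) e'.1 e'.2 by rewrite inME.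
  have hJ : Jset (Dset M e'.1 e'.2) e'.1 e'.2 = M by have := congr1 fst E.
  rewrite -hJ occ321_J // in h321.
  rewrite -hJ occ21_J // in h21.
  rewrite in_set /= inSD inSel /=; apply/andP; split.
    apply/and3P; split.
    + by apply/matchingP.
    + by rewrite addn0 in h21; case: h21 => ->; rewrite addn0.
    + by move: h321; case: (occ321 _).
  rewrite he' /=; move: h321; case: (hasP _ _ _); first by rewrite addn1.
  by case: (inM _ _ _) => //; rewrite addn0 /= addn1.
Qed.


Definition F n s k := a_n0 (n - s - k) * 'C(n - s - k, s) * 'C(k + s - 1, k).

Lemma occ321_le n (M : {set arc n}) : occ321 M <= occ21 M.
Proof.
rewrite occ321E occ21E; apply: subset_leq_card; apply/subsetP => p.
by rewrite !inE => /andP[-> /andP[-> _]].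
Qed.

Lemma occ21_le n (M : {set arc n}) : is_matching M -> occ21 M <= n.
Proof.
move=> hm; rewrite occ21E; apply: (leq_trans _ (eq_leq (card_match hm))); apply: subset_leq_card.
by apply/subsetP => p; rewrite inE => /andP[].
Qed.

Lemma D00 n : Dn n 0 0 = a_n0 n.
Proof.
rewrite /Dn /a_n0; apply: eq_card => M; rewrite !inE.
case: (boolP (is_matching M)) => //= _.
case: (eqVneq (occ21 M) 0) => //= h.
by have := occ321_le M; rewrite h leqn0 => ->.
Qed.

Lemma D0 s k : 0 < s + k -> Dn 0 s k = 0.
Proof.
move=> h; apply/eqP; rewrite cards_eq0; apply/eqP/setP => M; rewrite !inE.
apply/negbTE/negP => /and3P[hm /eqP h21 _].
have := occ21_le hm; lia.
Qed.

Lemma closed k : forall n s, Dn n s k = F n s k.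
Proof.
elim: k => [|k IH] n s.
  elim: s n => [|s IHs] n.
    by rewrite D00 /F !subn0 bin0 /= muln1 muln1.
  case: n => [|n].
    by rewrite D0 // /F /= bin0n muln0 mul0n.
  apply/eqP; rewrite -(eqn_pmul2l (ltn0Sn s)) R2 IHs /F; apply/eqP.
  rewrite !subn0 !bin0 !muln1.
  by rewrite [RHS]mulnCA mul_bin_left mulnCA.
case: n => [|n].
  rewrite D0 ?addnS // /F; case: s => [|s]; first by rewrite (@bin_small (k.+1 + 0 - 1)) ?muln0 //; lia.
  by rewrite /= bin0n muln0 mul0n.
apply/eqP; rewrite -(eqn_pmul2l (ltn0Sn k)) R1 IH /F; apply/eqP.
have -> : n.+1 - s - k.+1 = n - s - k by lia.
have -> : k.+1 + s - 1 = k + s by lia.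
rewrite [RHS]mulnCA -mul_bin_diag.
have -> : (k + s).-1 = k + s - 1 by lia.
by rewrite mulnCA [s + k]addnC.
Qed.


Lemma partition_card (T : finType) (A : {set T}) (f : T -> nat) N :
  (forall x, x \in A -> f x < N) ->
  #|A| = \sum_(s < N) #|[set x in A | f x == s]|.
Proof.
move=> hf; rewrite (eq_bigr (fun s : 'I_N => \sum_(x in A) ((f x == s) : nat))); last first.
  by move=> s _; rewrite card_sum.
rewrite exchange_big /= -sum1_card; apply: eq_bigr => x xA.
rewrite (bigD1 (Ordinal (hf x xA))) //= eqxx big1 // => s hs.
case: (eqVneq (f x) s) => // e; case/negP: hs; apply/eqP/val_inj; by rewrite /= e.
Qed.

Lemma c_part n k : c_nk n k = \sum_(s < n.+1) Dn n s k.
Proof.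
rewrite /c_nk (@partition_card _ _ (fun M => occ21 M - k) n.+1).
  apply: eq_bigr => s _; apply: eq_card => M; rewrite !inE.
  case: (boolP (is_matching M)) => //= hm.
  case: (eqVneq (occ321 M) k) => [e|]; last by rewrite andbF.
  have := occ321_le M; rewrite e => le.
  by rewrite andbT; apply/eqP/eqP; lia.
move=> M; rewrite inE => /andP[hm _]; have := occ21_le hm; lia.
Qed.

Theorem theorem3 (n : nat) : (0 < n)%N ->
  c_nk n 0 = (\sum_(0 <= s < (n./2).+1) 'C(n - s, s) * a_n0 (n - s))%N /\
  (forall k : nat, (0 < k)%N ->
     c_nk n k = (\sum_(1 <= s < ((n - k)./2).+1)
                   'C(k + s - 1, k) * 'C(n - k - s, s) * a_n0 (n - k - s))%N).
Proof.
move=> n0; split.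
  rewrite c_part (eq_bigr (fun s : 'I_n.+1 => F n s 0)); last by move=> s _; rewrite closed.
  rewrite -(big_mkord xpredT (fun s => F n s 0)).
  rewrite (@big_cat_nat _ _ _ (n./2).+1) //=; last by lia.
  rewrite [X in _ + X]big_nat_cond [X in _ + X]big1 ?addn0; last first.
    move=> i /andP[/andP[h1 h2] _]; rewrite /F (@bin_small (n - i - 0)) ?muln0 //; lia.
  by apply: eq_bigr => i _; rewrite /F subn0 add0n bin0 muln1 mulnC.
move=> k k0.
rewrite c_part (eq_bigr (fun s : 'I_n.+1 => F n s k)); last by move=> s _; rewrite closed.
rewrite -(big_mkord xpredT (fun s => F n s k)).
rewrite (@big_cat_nat _ _ _ 1) //=.
have hm1 : 1 <= ((n - k)./2).+1 by [].
have hm2 : ((n - k)./2).+1 <= n.+1 by lia.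
rewrite (@big_cat_nat _ _ _ ((n - k)./2).+1 1 _ _ _ hm1 hm2) /=.
rewrite big_nat1 /F (@bin_small (k + 0 - 1)); last by lia.
rewrite muln0 add0n.
rewrite [X in _ + X]big_nat_cond [X in _ + X]big1 ?addn0; last first.
  move=> i /andP[/andP[h1 h2] _]; rewrite (@bin_small (n - i - k)) ?muln0 //; lia.
apply: eq_bigr => i _.
have -> : n - i - k = n - k - i by lia.
by rewrite -mulnA mulnC [X in X * _]mulnC.
Qed.
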